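(* Suppose Assumption 1 holds and there is $\eta\in[0,1)$ such that every $d^k$ satisfies the $\eta$-inexactness condition for $Q_k=Q^{x^k}_{H_k}$ ($f$ need not be convex). For Algorithm 1, if $H_k\succeq\sigma I$ for some $\sigma>0$ and all $k$, then for all $k\ge0$ $$\min_{0\le t\le k}|Q_t(d^t)|\le\frac{F(x^0)-F^*}{\gamma(k+1)\min_{0\le t\le k}\alpha_t}\le\frac{F(x^0)-F^*}{\gamma(k+1)}\max\left\{1,\ \frac{(1+\sqrt\eta)L}{2\beta(1-\gamma)\sigma}\right\}.$$ For Algorithm 2 (with $H^0_k\succ0$ for Variant 1), with $Q_t=Q^{x^t}_{H_t}$ for the final $H_t$, $$\min_{0\le t\le k}|Q_t(d^t)|\le\frac{F(x^0)-F^*}{\gamma(k+1)}.$$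
   Context: Problem setting: $F(x)=f(x)+\psi(x)$ on $\mathbb{R}^n$, $F^*=\inf F$. Assumption 1: $f$ is differentiable with $L$-Lipschitz continuous gradient ($L>0$); $\psi:\mathbb{R}^n\to\mathbb{R}\cup\{+\infty\}$ is convex, proper and closed; $F$ is bounded below; the solution set $\Omega=\{x:F(x)=F^*\}$ is nonempty. For $x\in\mathbb{R}^n$ and symmetric $H$, $Q^x_H(d)\coloneqq\nabla f(x)^Td+\frac12d^THd+\psi(x+d)-\psi(x)$, $Q^*=\inf_dQ^x_H(d)$; $d$ satisfies the $\eta$-inexactness condition if $Q^x_H(d)\le(1-\eta)Q^*$. Algorithm 1: given $\beta,\gamma\in(0,1)$, $x^0$, fixed $\eta\in[0,1)$; for $k=0,1,\dots$: choose symmetric $H_k$ with $Q_k\coloneqq Q^{x^k}_{H_k}$ strongly convex; compute $d^k$ satisfying the $\eta$-inexactness condition for $Q_k$; let $\Delta_k=\nabla f(x^k)^Td^k+\psi(x^k+d^k)-\psi(x^k)$; let $\alpha_k=\beta^i$ for the smallest nonnegative integer $i$ with $F(x^k+\alpha_kd^k)\le F(x^k)+\alpha_k\gamma\Delta_k$; set $x^{k+1}=x^k+\alpha_kd^k$. Algorithm 2: given $\beta\in(0,1)$, $\gamma\in(0,1]$, $x^0$, fixed $\eta\in[0,1)$; for each $k$: choose symmetric $H^0_k$ (in Variant 1, $H^0_k\succ0$); set $\alpha_k\leftarrow1$, $H_k\leftarrow H^0_k$, compute $d^k$ satisfying the $\eta$-inexactness condition for $Q^{x^k}_{H_k}$;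 while $F(x^k)-F(x^k+d^k)\ge-\gamma Q^{x^k}_{H_k}(d^k)\ge0$ fails: Variant 1 sets $\alpha_k\leftarrow\beta\alpha_k$, $H_k\leftarrow H^0_k/\alpha_k$; Variant 2 sets $H_k\leftarrow H^0_k+\alpha_k^{-1}I$, then $\alpha_k\leftarrow\beta\alpha_k$; then $d^k$ is recomputed satisfying the $\eta$-inexactness condition. Finally $x^{k+1}=x^k+d^k$; ''final $H_k$'' is the accepted matrix. *)

(* Defs.v *)
From Stdlib Require Import Reals.
From mathcomp Require Import ssreflect ssrbool ssrfun eqtype ssrnat seq fintype bigop.
Set Implicit Arguments.
Unset Strict Implicit.
Open Scope R_scope.

Definition vec (n : nat) := 'I_n -> R.
Definition mat (n : nat) := 'I_n -> 'I_n -> R.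

Section LinAlg.
Variable n : nat.

Definition vadd (u v : vec n) : vec n := fun i => u i + v i.
Definition vsub (u v : vec n) : vec n := fun i => u i - v i.
Definition vscale (a : R) (v : vec n) : vec n := fun i => a * v i.
Definition dot (u v : vec n) : R := \big[Rplus/0]_(i < n) (u i * v i).
Definition norm (v : vec n) : R := sqrt (dot v v).

Definition mulmv (H : mat n) (v : vec n) : vec n :=
  fun i => \big[Rplus/0]_(j < n) (H i j * v j).
Definition quad (H : mat n) (v : vec n) : R := dot v (mulmv H v).
Definition idm : mat n := fun i j => if i == j then 1 else 0.
Definition madd (A B : mat n) : mat n := fun i j => A i j + B i j.
Definition mscale (a : R) (A : mat n) : mat n := fun i j => a * A i j.
Definition symmetric (H : mat n) : Prop := forall i j, H i j = H j i.
Definition psd_ge (sigma : R) (H : mat n) : Prop :=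
  forall v, sigma * (norm v) ^ 2 <= quad H v.
Definition posdef (H : mat n) : Prop :=
  forall v, v <> (fun _ => 0) -> 0 < quad H v.

End LinAlg.

Arguments vadd {n}. Arguments vsub {n}. Arguments vscale {n}.
Arguments dot {n}. Arguments norm {n}. Arguments mulmv {n}.
Arguments quad {n}. Arguments idm {n}. Arguments madd {n}.
Arguments mscale {n}. Arguments symmetric {n}. Arguments psd_ge {n}.
Arguments posdef {n}.

Definition is_inf_on {T : Type} (P : T -> Prop) (g : T -> R) (m : R) : Prop :=
  (forall v, P v -> m <= g v) /\
  (forall m', (forall v, P v -> m' <= g v) -> m' <= m).

Fixpoint min_upto (g : nat -> R) (k : nat) : R :=
  match k with
  | O => g O
  | S k' => Rmin (min_upto g k') (g (S k'))
  end.

(* ---------------- Problem setting ----------------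
   psi : R^n -> R u {+oo} is represented by its effective domain D and a
   real-valued function psi, with psi = +oo outside D. *)
Section Problem.
Variable n : nat.
Variables (f : vec n -> R) (gradf : vec n -> vec n) (D : vec n -> Prop)
          (psi : vec n -> R).

Definition Fv (x : vec n) : R := f x + psi x.

Definition is_gradient : Prop :=
  forall x eps, 0 < eps -> exists del, 0 < del /\
    forall h, norm h < del ->
      Rabs (f (vadd x h) - f x - dot (gradf x) h) <= eps * norm h.

Definition lipschitz_grad (L : R) : Prop :=
  forall x y, norm (vsub (gradf x) (gradf y)) <= L * norm (vsub x y).

Definition psi_convex : Prop :=
  forall x y t, D x -> D y -> 0 <= t <= 1 ->
    D (vadd (vscale t x) (vscale (1 - t) y)) /\
    psi (vadd (vscale t x) (vscale (1 - t) y)) <= t * psi x + (1 - t) * psi y.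

Definition psi_proper : Prop := exists x, D x.

Definition psi_closed : Prop :=
  forall (xs : nat -> vec n) (ts : nat -> R) (x : vec n) (t : R),
    (forall j, D (xs j) /\ psi (xs j) <= ts j) ->
    Un_cv (fun j => norm (vsub (xs j) x)) 0 -> Un_cv ts t ->
    D x /\ psi x <= t.

(* Assumption 1, with Fstar = inf F and Omega nonempty *)
Definition assumption1 (L Fstar : R) : Prop :=
  0 < L /\ is_gradient /\ lipschitz_grad L /\
  psi_convex /\ psi_proper /\ psi_closed /\
  is_inf_on D Fv Fstar /\
  (exists xs, D xs /\ Fv xs = Fstar).

(* Q^x_H(d) (finite part; Q^x_H(d) = +oo when x + d is not in D) *)
Definition Qval (x : vec n) (H : mat n) (d : vec n) : R :=
  dot (gradf x) d + / 2 * quad H d + psi (vadd x d) - psi x.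

Definition Qdom (x : vec n) (d : vec n) : Prop := D (vadd x d).

Definition eta_inexact (eta : R) (x : vec n) (H : mat n) (d : vec n) : Prop :=
  Qdom x d /\
  exists qstar, is_inf_on (Qdom x) (Qval x H) qstar /\
                Qval x H d <= (1 - eta) * qstar.

Definition Q_strongly_convex (x : vec n) (H : mat n) : Prop :=
  exists mu, 0 < mu /\
    forall d1 d2 t, 0 <= t <= 1 -> Qdom x d1 -> Qdom x d2 ->
      Qval x H (vadd (vscale t d1) (vscale (1 - t) d2)) <=
        t * Qval x H d1 + (1 - t) * Qval x H d2
        - mu / 2 * t * (1 - t) * (norm (vsub d1 d2)) ^ 2.

Definition Delta (x d : vec n) : R :=
  dot (gradf x) d + psi (vadd x d) - psi x.

Definition armijo (gamma : R) (x d : vec n) (a : R) : Prop :=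
  D (vadd x (vscale a d)) /\
  Fv (vadd x (vscale a d)) <= Fv x + a * gamma * Delta x d.

Definition alg1_run (beta gamma eta : R) (x0 : vec n)
    (x : nat -> vec n) (H : nat -> mat n) (d : nat -> vec n)
    (alpha : nat -> R) : Prop :=
  0 < beta < 1 /\ 0 < gamma < 1 /\ 0 <= eta < 1 /\ x O = x0 /\
  forall k,
    symmetric (H k) /\ Q_strongly_convex (x k) (H k) /\
    eta_inexact eta (x k) (H k) (d k) /\
    (exists i : nat, alpha k = beta ^ i /\ armijo gamma (x k) (d k) (beta ^ i) /\
       forall j : nat, (j < i)%N -> ~ armijo gamma (x k) (d k) (beta ^ j)) /\
    x (S k) = vadd (x k) (vscale (alpha k) (d k)).

Definition accept2 (gamma : R) (x : vec n) (H : mat n) (d : vec n) : Prop :=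
  D (vadd x d) /\
  Fv x - Fv (vadd x d) >= - gamma * Qval x H d /\
  - gamma * Qval x H d >= 0.

End Problem.

Inductive variant := Variant1 | Variant2.

(* Matrix used at trial j (j-th pass, starting at 0) of iteration k of
   Algorithm 2, given H^0_k. Variant 1: alpha = beta^j, H = H0/alpha. *)
Definition trial_mat {n} (v : variant) (beta : R) (H0 : mat n) (j : nat) : mat n :=
  match v with
  | Variant1 => mscale (/ beta ^ j) H0
  | Variant2 => match j with
                | O => H0
                | S j' => madd H0 (mscale (/ beta ^ j') idm)
                end
  end.

Section Alg2.
Variable n : nat.
Variables (f : vec n -> R) (gradf : vec n -> vec n) (D : vec n -> Prop)
          (psi : vec n -> R).

(* A run of Algorithm 2: iteration k performs m k failed trials
   j = 0 .. m k - 1 and accepts trial m k; Hs k j and ds k j are the matrix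
   and direction of trial j. *)
Definition alg2_run (v : variant) (beta gamma eta : R) (x0 : vec n)
    (x : nat -> vec n) (H0 : nat -> mat n) (m : nat -> nat)
    (Hs : nat -> nat -> mat n) (ds : nat -> nat -> vec n) : Prop :=
  0 < beta < 1 /\ 0 < gamma <= 1 /\ 0 <= eta < 1 /\ x O = x0 /\
  forall k,
    symmetric (H0 k) /\ (v = Variant1 -> posdef (H0 k)) /\
    (forall j, Hs k j = trial_mat v beta (H0 k) j) /\
    (forall j, (j <= m k)%N -> eta_inexact gradf D psi eta (x k) (Hs k j) (ds k j)) /\
    (forall j, (j < m k)%N -> ~ accept2 f gradf D psi gamma (x k) (Hs k j) (ds k j)) /\
    accept2 f gradf D psi gamma (x k) (Hs k (m k)) (ds k (m k)) /\
    x (S k) = vadd (x k) (ds k (m k)).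

End Alg2.

(* Main.v *)
Require Import Defs.
From Stdlib Require Import Reals.
From mathcomp Require Import ssreflect ssrbool ssrfun eqtype ssrnat seq fintype bigop.
From Stdlib Require Import Lra FunctionalExtensionality.
Set Implicit Arguments.
Open Scope R_scope.

Lemma sum_add n (F G : 'I_n -> R) :
  \big[Rplus/0]_(i < n) (F i + G i) = \big[Rplus/0]_(i < n) F i + \big[Rplus/0]_(i < n) G i.
Proof.
apply: (big_rec3 (fun a b c => a = b + c)); first lra.
move=> i y1 y2 y3 _ ->; lra.
Qed.

Lemma sum_scale n (c : R) (F : 'I_n -> R) :
  \big[Rplus/0]_(i < n) (c * F i) = c * \big[Rplus/0]_(i < n) F i.
Proof.
apply: (big_ind2 (fun a b => a = c * b)); first lra.
  by move=> x1 x2 y1 y2 -> ->; lra.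
by [].
Qed.

Lemma sum_le n (F G : 'I_n -> R) : (forall i, F i <= G i) ->
  \big[Rplus/0]_(i < n) F i <= \big[Rplus/0]_(i < n) G i.
Proof.
move=> H; apply: (big_ind2 (fun a b => a <= b)); first lra.
  by move=> x1 x2 y1 y2 ? ?; lra.
by move=> i _; apply: H.
Qed.

Lemma dot_scale_r n (u v : vec n) c : dot u (vscale c v) = c * dot u v.
Proof.
rewrite /dot -sum_scale; apply: eq_bigr => i _; rewrite /vscale; ring.
Qed.

Lemma dot_scale_l n (u v : vec n) c : dot (vscale c u) v = c * dot u v.
Proof.
rewrite /dot -sum_scale; apply: eq_bigr => i _; rewrite /vscale; ring.
Qed.

Lemma dot_sub_l n (u w v : vec n) : dot (vsub u w) v = dot u v - dot w v.
Proof.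
rewrite /dot.
have -> : \big[Rplus/0]_(i < n) (vsub u w i * v i)
   = \big[Rplus/0]_(i < n) (u i * v i + (-1) * (w i * v i)).
  by apply: eq_bigr => i _; rewrite /vsub; ring.
rewrite sum_add sum_scale; ring.
Qed.

Lemma dot_zero_r n (u : vec n) : dot u (fun _ => 0) = 0.
Proof.
have := dot_scale_r u (fun _ => 0) 0.
have -> : vscale 0 (fun _ : 'I_n => 0) = (fun _ => 0).
  by apply: functional_extensionality => i; rewrite /vscale; ring.
move=> ->; ring.
Qed.

Lemma dot_self_ge0 n (u : vec n) : 0 <= dot u u.
Proof.
apply: (big_ind (fun a => 0 <= a)); first lra.
  by move=> ? ? ? ?; lra.
move=> i _; nra.
Qed.

Lemma mulmv_scale n (H : mat n) c v : mulmv H (vscale c v) = vscale c (mulmv H v).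
Proof.
apply: functional_extensionality => i; rewrite /mulmv /vscale -sum_scale.
by apply: eq_bigr => j _; ring.
Qed.

Lemma quad_scale n (H : mat n) c v : quad H (vscale c v) = c ^ 2 * quad H v.
Proof.
rewrite /quad mulmv_scale dot_scale_l dot_scale_r; ring.
Qed.

Lemma dot_ineq n (u d : vec n) lam : 0 < lam ->
  2 * dot u d <= lam * dot u u + / lam * dot d d.
Proof.
move=> Hl.
rewrite /dot -!sum_scale -sum_add; apply: sum_le => i.
have : 0 <= lam * (u i - / lam * d i) ^ 2 by apply: Rmult_le_pos; [lra| apply: pow2_ge_0].
have : lam * / lam = 1 by field; lra.
move=> e h.
have E : lam * (u i - / lam * d i) ^ 2 = lam * (u i * u i) - 2 * (u i * d i) * (lam * / lam) + / lam * (d i * d i) * (lam * / lam) by ring.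
rewrite e in E; lra.
Qed.

Lemma norm_sq n (v : vec n) : norm v ^ 2 = dot v v.
Proof. by rewrite /norm pow2_sqrt //; apply: dot_self_ge0. Qed.

Lemma norm_scale n (v : vec n) c : norm (vscale c v) = Rabs c * norm v.
Proof.
rewrite /norm dot_scale_l dot_scale_r -Rmult_assoc sqrt_mult_alt.
  by rewrite -sqrt_Rsqr_abs.
nra.
Qed.

Lemma alg_key a q r : 0 <= r < 1 -> 0 <= q ->
  (forall t, 0 <= t <= 1 -> - a + q / 2 <= (1 - r ^ 2) * (- t * a + t ^ 2 * q / 2)) ->
  q <= (1 + r) * a.
Proof.
intros Hr Hq H.
destruct (Req_dec r 0) as [Hr0|Hr0].
- subst r. destruct (Rle_lt_dec q a) as [Hqa|Hqa]; [lra|].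
  assert (H0 := H 0 ltac:(lra)).
  assert (Hqp : 0 < q) by lra.
  assert (Ht : 0 <= a / q <= 1).
  { split; [unfold Rdiv; apply Rmult_le_pos; [lra| left; apply Rinv_0_lt_compat; lra]|].
    apply (Rmult_le_reg_r q); [lra|]. unfold Rdiv. rewrite Rmult_assoc Rinv_l; lra. }
  assert (H1 := H (a / q) Ht).
  replace ((1 - 0 ^ 2) * (- (a / q) * a + (a / q) ^ 2 * q / 2)) with (- (a * a) / (2 * q)) in H1
    by (field; lra).
  assert (H2 : (- a + q / 2) * (2 * q) <= - (a * a) / (2 * q) * (2 * q))
    by (apply Rmult_le_compat_r; lra).
  replace (- (a * a) / (2 * q) * (2 * q)) with (- (a * a)) in H2 by (field; lra).
  nra.
- assert (Hrp : 0 < r) by lra.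
  assert (Ht : 0 <= / (1 + r) <= 1).
  { split; [left; apply Rinv_0_lt_compat; lra|].
    rewrite -Rinv_1. apply Rinv_le_contravar; lra. }
  assert (H1 := H _ Ht).
  replace ((1 - r ^ 2) * (- / (1 + r) * a + (/ (1 + r)) ^ 2 * q / 2))
    with (- (1 - r) * a + (1 - r) * q / (2 * (1 + r))) in H1 by (field; lra).
  assert (H2 : r * q / (1 + r) <= r * a).
  { replace (r * q / (1 + r)) with (q / 2 - (1 - r) * q / (2 * (1 + r))) by (field; lra).
    lra. }
  assert (H3 : q / (1 + r) <= a).
  { apply (Rmult_le_reg_l r); [lra|]. replace (r * (q / (1 + r))) with (r * q / (1 + r)) by (field; lra). lra. }
  assert (H4 : q / (1 + r) * (1 + r) <= a * (1 + r)) by (apply Rmult_le_compat_r; lra).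
  replace (q / (1 + r) * (1 + r)) with q in H4 by (field; lra).
  lra.
Qed.

Lemma deriv_phi n (f : vec n -> R) gradf : is_gradient f gradf ->
  forall x d s, derivable_pt_lim (fun s => f (vadd x (vscale s d))) s
                  (dot (gradf (vadd x (vscale s d))) d).
Proof.
move=> Hg x d s eps Heps.
set y := vadd x (vscale s d).
have Hn : 0 <= norm d by apply: sqrt_pos.
have Hep : 0 < eps / (2 * (norm d + 1)) by apply: Rdiv_lt_0_compat; lra.
have [del [Hdel Hf]] := Hg y _ Hep.
have Hd' : 0 < del / (norm d + 1) by apply: Rdiv_lt_0_compat; lra.
exists (mkposreal _ Hd') => h Hh0 /= Hh.
have Ey : vadd x (vscale (s + h) d) = vadd y (vscale h d).
  by apply: functional_extensionality => i; rewrite /y /vadd /vscale; ring.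
rewrite Ey.
have Hah : 0 < Rabs h by apply: Rabs_pos_lt.
have Hnh : norm (vscale h d) < del.
  rewrite norm_scale.
  have : Rabs h * (norm d + 1) < del.
    have := Rmult_lt_compat_r (norm d + 1) _ _ ltac:(lra) Hh.
    by rewrite /Rdiv Rmult_assoc Rinv_l ?Rmult_1_r; lra.
  nra.
have := Hf _ Hnh.
rewrite dot_scale_r norm_scale => H1.
have -> : (f (vadd y (vscale h d)) - f y) / h - dot (gradf y) d
   = (f (vadd y (vscale h d)) - f y - h * dot (gradf y) d) / h by field.
rewrite /Rdiv Rabs_mult Rabs_inv.
apply: (Rle_lt_trans _ (eps / (2 * (norm d + 1)) * norm d)).
  apply: (Rmult_le_reg_r (Rabs h)) => //.
  rewrite Rmult_assoc Rinv_l; last lra.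
  rewrite -/(Rdiv eps (2 * (norm d + 1))); nra.
have : eps / (2 * (norm d + 1)) * (norm d + 1) = eps / 2 by field; lra.
nra.
Qed.

Lemma descent n (f : vec n -> R) gradf L : is_gradient f gradf ->
  lipschitz_grad gradf L -> 0 < L ->
  forall x d a, 0 <= a ->
  f (vadd x (vscale a d)) <= f x + a * dot (gradf x) d + L * a ^ 2 / 2 * dot d d.
Proof.
move=> Hg HL HL0 x d a Ha.
have E0 : vadd x (vscale 0 d) = x.
  by apply: functional_extensionality => i; rewrite /vadd /vscale; ring.
case: (Req_dec a 0) => [->|Ha0].
  rewrite E0; lra.
set N := dot d d.
set g0 := dot (gradf x) d.
pose psi := fun s => f (vadd x (vscale s d)) - (s * g0 + L / 2 * N * (s * s)).
pose psi' := fun s => dot (gradf (vadd x (vscale s d))) d - (g0 + L * N * s).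
have Hd : forall c, 0 <= c <= a -> derivable_pt_lim psi c (psi' c).
  move=> c _.
  apply: derivable_pt_lim_minus; first by apply: deriv_phi.
  have -> : g0 + L * N * c = 1 * g0 + L / 2 * N * (1 * c + c * 1) by field.
  apply: derivable_pt_lim_plus.
    apply: derivable_pt_lim_scal_right; exact: derivable_pt_lim_id.
  apply: derivable_pt_lim_scal.
  apply: derivable_pt_lim_mult; exact: derivable_pt_lim_id.
have [c [Hc Hcr]] := MVT_cor2 psi psi' 0 a ltac:(lra) Hd.
have Hp : psi' c <= 0.
  rewrite /psi'.
  set U := vsub (gradf (vadd x (vscale c d))) (gradf x).
  have EU : dot U d = dot (gradf (vadd x (vscale c d))) d - g0 by rewrite dot_sub_l.
  have Hv : vsub (vadd x (vscale c d)) x = vscale c d.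
    by apply: functional_extensionality => i; rewrite /vadd /vscale /vsub; ring.
  have HU := HL (vadd x (vscale c d)) x.
  rewrite Hv norm_scale Rabs_pos_eq in HU; last lra.
  have HUU : dot U U <= (L * c) ^ 2 * N.
    rewrite -norm_sq /N -norm_sq.
    have := norm_sq U; have := norm_sq d.
    have : 0 <= norm U by apply: sqrt_pos.
    have : 0 <= norm d by apply: sqrt_pos.
    move=> H1 H2 H3 H4; have : 0 <= norm U <= L * c * norm d by split; [lra| rewrite -/U in HU; lra]. move=> [? ?]; have -> : (L * c) ^ 2 * norm d ^ 2 = (L * c * norm d) ^ 2 by ring. apply: pow_incr; lra.
  have Hlc : 0 < L * c by nra.
  have := @dot_ineq _ U d (/ (L * c)) ltac:(apply: Rinv_0_lt_compat; lra).
  rewrite Rinv_inv -/N.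
  have Hi : / (L * c) * ((L * c) ^ 2 * N) = L * c * N by field; lra.
  have HN : 0 <= N by apply: dot_self_ge0.
  have : / (L * c) * dot U U <= / (L * c) * ((L * c) ^ 2 * N).
    apply: Rmult_le_compat_l => //; left; apply: Rinv_0_lt_compat; lra.
  lra.
have Hpsi0 : psi 0 = f x by rewrite /psi E0; ring.
have : psi a <= psi 0 by nra.
rewrite Hpsi0 /psi /N /g0.
have -> : a ^ 2 = a * a by ring.
lra.
Qed.

Lemma vadd_zero n (x : vec n) : vadd x (fun _ => 0) = x.
Proof. by apply: functional_extensionality => i; rewrite /vadd; ring. Qed.

Lemma quad_zero n (H : mat n) : quad H (fun _ => 0) = 0.
Proof.
rewrite /quad.
have -> : mulmv H (fun _ => 0) = (fun _ => 0).
  apply: functional_extensionality => i; rewrite /mulmv.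
  apply: (big_ind (fun a => a = 0)) => //.
    by move=> ? ? -> ->; ring.
  by move=> j _; ring.
by rewrite dot_zero_r.
Qed.

Lemma conv_eq n (x d : vec n) t :
  vadd (vscale t (vadd x d)) (vscale (1 - t) x) = vadd x (vscale t d).
Proof. by apply: functional_extensionality => i; rewrite /vadd /vscale; ring. Qed.

Lemma dir_bound n (gradf : vec n -> vec n) (D : vec n -> Prop) (psi : vec n -> R)
   eta x H d :
  psi_convex D psi -> D x -> 0 <= eta < 1 -> 0 <= quad H d ->
  eta_inexact gradf D psi eta x H d ->
  Qval gradf psi x H d <= 0 /\
  Defs.Delta gradf psi x d <= Qval gradf psi x H d /\
  quad H d <= (1 + sqrt eta) * (- Defs.Delta gradf psi x d).
Proof.
move=> Hc Hx He Hq [Hd [qs [[Hinf _] Hle]]].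
have EQ : Qval gradf psi x H d = Defs.Delta gradf psi x d + / 2 * quad H d.
  by rewrite /Qval /Defs.Delta; ring.
have Hq0 : qs <= 0.
  have := Hinf (fun _ => 0); rewrite /Qdom vadd_zero => /(_ Hx).
  rewrite /Qval vadd_zero dot_zero_r.
  by rewrite quad_zero; lra.
have HQ0 : Qval gradf psi x H d <= 0.
  have : (1 - eta) * qs <= 0 by nra.
  lra.
split => //; split; first lra.
apply: alg_key.
- by split; [apply: sqrt_pos | rewrite -sqrt_1; apply: sqrt_lt_1_alt; lra].
- done.
move=> t Ht.
rewrite pow2_sqrt; last lra.
have [HD Hp] := Hc _ _ t Hd Hx Ht.
rewrite conv_eq in HD Hp.
have := Hinf _ HD.
rewrite /Qval dot_scale_r quad_scale => Hi.
have H1 : qs <= t * Defs.Delta gradf psi x d + t ^ 2 * quad H d / 2.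
  rewrite /Defs.Delta; nra.
have H2 : (1 - eta) * qs <= (1 - eta) * (t * Defs.Delta gradf psi x d + t ^ 2 * quad H d / 2).
  apply: Rmult_le_compat_l; lra.
rewrite EQ in Hle.
lra.
Qed.

Lemma armijo_suff n (f : vec n -> R) gradf D psi L sigma eta gamma x H d a :
  is_gradient f gradf -> lipschitz_grad gradf L -> 0 < L ->
  psi_convex D psi -> D x -> D (vadd x d) -> 0 < sigma -> psd_ge sigma H ->
  0 <= eta -> 0 < gamma < 1 ->
  quad H d <= (1 + sqrt eta) * (- Defs.Delta gradf psi x d) ->
  0 < a <= 1 -> a <= 2 * (1 - gamma) * sigma / ((1 + sqrt eta) * L) ->
  armijo f gradf D psi gamma x d a.
Proof.
move=> Hg HL HL0 Hc Hx Hxd Hs Hpsd He Hga Hq Ha Hat.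
have [HD Hp] := Hc _ _ a Hxd Hx ltac:(lra).
rewrite conv_eq in HD Hp.
split => //.
have Hdes := descent Hg HL HL0 x d (a:=a) ltac:(lra).
set r := sqrt eta in Hq Hat.
have Hr : 0 <= r by apply: sqrt_pos.
set N := dot d d in Hdes.
have HN : sigma * N <= quad H d by rewrite /N -norm_sq; apply: Hpsd.
have HN0 : 0 <= N by apply: dot_self_ge0.
set Dl := Defs.Delta gradf psi x d in Hq *.
have Ha2 : a * ((1 + r) * L) <= 2 * (1 - gamma) * sigma.
  have := Rmult_le_compat_r ((1 + r) * L) _ _ ltac:(nra) Hat.
  rewrite /Rdiv Rmult_assoc Rinv_l; [lra | nra].
(* L a N (1+r) / 2 <= (1-gamma) sigma N <= (1-gamma)(1+r)(-Dl) *)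
have K1 : a * L * N * (1 + r) <= 2 * ((1 - gamma) * (1 + r) * (- Dl)).
  have : a * ((1 + r) * L) * N <= 2 * (1 - gamma) * sigma * N by apply: Rmult_le_compat_r.
  have : (1 - gamma) * (sigma * N) <= (1 - gamma) * ((1 + r) * (- Dl)) by apply: Rmult_le_compat_l; lra.
  nra.
have K2 : a * L * N <= 2 * ((1 - gamma) * (- Dl)).
  apply: (Rmult_le_reg_r (1 + r)); first lra.
  nra.
have K3 : L * a ^ 2 / 2 * N <= a * ((1 - gamma) * (- Dl)).
  have : a * (a * L * N) <= a * (2 * ((1 - gamma) * (- Dl))) by apply: Rmult_le_compat_l; lra.
  move=> h; have -> : L * a ^ 2 / 2 * N = a * (a * L * N) / 2 by field.
  lra.
rewrite /Fv.
have EDl : Dl = dot (gradf x) d + psi (vadd x d) - psi x by [].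
nra.
Qed.

Lemma min_upto_lb (a : nat -> R) c : (forall t, c <= a t) -> forall k, c <= min_upto a k.
Proof. move=> H; elim=> [|k IH] /=; first exact: H. by apply: Rmin_glb. Qed.

Lemma min_upto_const k : min_upto (fun _ => 1) k = 1.
Proof. elim: k => [|k IH] //=; rewrite IH; apply: Rmin_left; lra. Qed.

Lemma pow_le1 b j : 0 <= b <= 1 -> b ^ j <= 1.
Proof. move=> Hb; elim: j => [|j IH] /=; first lra. have := pow_le b j ltac:(lra). nra. Qed.

Lemma telescope (Fs a b : nat -> R) g Fstar : 0 < g ->
  (forall t, 0 <= a t) -> (forall t, 0 <= b t) ->
  (forall t, Fs (S t) <= Fs t - g * a t * b t) -> (forall t, Fstar <= Fs t) ->
  forall k, g * INR (k + 1) * (min_upto a k * min_upto b k) <= Fs O - Fstar.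
Proof.
move=> Hg Ha Hb Hd Hs.
have Hma := @min_upto_lb a 0 Ha; have Hmb := @min_upto_lb b 0 Hb.
suff : forall k, Fs (S k) <= Fs O - g * INR (k + 1) * (min_upto a k * min_upto b k).
  by move=> h k; have := h k; have := Hs (S k); lra.
elim=> [|k IH].
  rewrite /=; have := Hd O; lra.
have E : INR (k.+1 + 1) = INR (k + 1) + 1 by rewrite !addn1 S_INR.
rewrite E.
have Hd' := Hd (S k).
have P1 : min_upto a k.+1 * min_upto b k.+1 <= min_upto a k * min_upto b k.
  apply: Rmult_le_compat; [exact: Hma | exact: Hmb | exact: Rmin_l | exact: Rmin_l].
have P2 : min_upto a k.+1 * min_upto b k.+1 <= a k.+1 * b k.+1.
  apply: Rmult_le_compat; [exact: Hma | exact: Hmb | exact: Rmin_r | exact: Rmin_r].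
have Hk : 0 <= INR (k + 1) by apply: pos_INR.
have : g * INR (k + 1) * (min_upto a k.+1 * min_upto b k.+1) <= g * INR (k + 1) * (min_upto a k * min_upto b k).
  apply: Rmult_le_compat_l => //; nra.
have : g * (min_upto a k.+1 * min_upto b k.+1) <= g * (a k.+1 * b k.+1).
  by apply: Rmult_le_compat_l; lra.
nra.
Qed.

Theorem lemma8 (n : nat) (f : vec n -> R) (gradf : vec n -> vec n)
    (D : vec n -> Prop) (psi : vec n -> R) (L Fstar eta : R) (x0 : vec n) :
  assumption1 f gradf D psi L Fstar ->
  0 <= eta < 1 ->
  D x0 ->
  (* Algorithm 1 *)
  (forall (beta gamma sigma : R) (x : nat -> vec n) (H : nat -> mat n)
          (d : nat -> vec n) (alpha : nat -> R),
     alg1_run f gradf D psi beta gamma eta x0 x H d alpha ->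
     0 < sigma -> (forall k, psd_ge sigma (H k)) ->
     forall k : nat,
       min_upto (fun t => Rabs (Qval gradf psi (x t) (H t) (d t))) k
         <= (Fv f psi x0 - Fstar) / (gamma * INR (k + 1) * min_upto alpha k)
       /\
       (Fv f psi x0 - Fstar) / (gamma * INR (k + 1) * min_upto alpha k)
         <= (Fv f psi x0 - Fstar) / (gamma * INR (k + 1)) *
            Rmax 1 ((1 + sqrt eta) * L / (2 * beta * (1 - gamma) * sigma)))
  /\
  (* Algorithm 2 (both variants) *)
  (forall (v : variant) (beta gamma : R) (x : nat -> vec n)
          (H0 : nat -> mat n) (m : nat -> nat) (Hs : nat -> nat -> mat n)
          (ds : nat -> nat -> vec n),
     alg2_run f gradf D psi v beta gamma eta x0 x H0 m Hs ds ->
     forall k : nat,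
       min_upto (fun t => Rabs (Qval gradf psi (x t) (Hs t (m t)) (ds t (m t)))) k
         <= (Fv f psi x0 - Fstar) / (gamma * INR (k + 1))).
Proof.
move=> [HL0 [Hgr [Hlip [Hcvx [_ [_ [[Hinf _] _]]]]]]] Heta Hx0.
have HA : 0 <= Fv f psi x0 - Fstar by have := Hinf _ Hx0; lra.
split.
- move=> beta gamma sigma x H d alpha [Hb [Hga [_ [Ex0 Hk]]]] Hs Hpsd k.
  have HD : forall t, D (x t).
    elim=> [|t IH]; first by rewrite Ex0.
    have [_ [_ [_ [[i [Hai [[HDa _] _]]] Hxt]]]] := Hk t.
    by rewrite Hxt Hai.
  have Hap : forall t, 0 < alpha t.
    move=> t; have [_ [_ [_ [[i [Hai _]] _]]]] := Hk t.
    rewrite Hai; apply: pow_lt; lra.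
  have Hdir : forall t, Qval gradf psi (x t) (H t) (d t) <= 0 /\
      Defs.Delta gradf psi (x t) (d t) <= Qval gradf psi (x t) (H t) (d t) /\
      quad (H t) (d t) <= (1 + sqrt eta) * (- Defs.Delta gradf psi (x t) (d t)).
    move=> t; have [_ [_ [Hin _]]] := Hk t.
    apply: (dir_bound Hcvx (HD t) Heta _ Hin).
    have := Hpsd t (d t); have := pow2_ge_0 (norm (d t)); nra.
  have Hdec : forall t, Fv f psi (x (S t)) <= Fv f psi (x t) -
      gamma * alpha t * Rabs (Qval gradf psi (x t) (H t) (d t)).
    move=> t; have [_ [_ [_ [[i [Hai [[_ HF] _]]] Hxt]]]] := Hk t.
    have [h1 [h2 _]] := Hdir t.
    rewrite Hxt Hai; rewrite -Hai in HF |- *.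
    rewrite Rabs_left1 //.
    have hag : 0 <= alpha t * gamma by have := Hap t; nra.
    have := Rmult_le_compat_l _ _ _ hag h2; lra.
  have Htel := telescope (fun t => Fv f psi (x t)) (alpha)
      (fun t => Rabs (Qval gradf psi (x t) (H t) (d t))) (g := gamma) (Fstar := Fstar)
      ltac:(lra) (fun t => Rlt_le _ _ (Hap t)) (fun t => Rabs_pos _) Hdec
      (fun t => Hinf _ (HD t)) k.
  rewrite /= Ex0 in Htel.
  set ma := min_upto alpha k in Htel *.
  set mQ := min_upto _ k in Htel *.
  set A := Fv f psi x0 - Fstar in Htel HA *.
  have Hma : 0 < ma.
    rewrite /ma; elim: (k) => [|j IH] /=; first exact: Hap.
    by apply: Rmin_glb_lt.
  have HI : 0 < INR (k + 1) by apply: lt_0_INR; rewrite addn1; apply/ltP.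
  have HB : 0 < gamma * INR (k + 1) by nra.
  have HP : 0 < gamma * INR (k + 1) * ma by nra.
  split.
    have -> : mQ = (gamma * INR (k + 1) * (ma * mQ)) / (gamma * INR (k + 1) * ma) by field; lra.
    rewrite /Rdiv; apply: Rmult_le_compat_r => //.
    by left; apply: Rinv_0_lt_compat.
  set c := (1 + sqrt eta) * L / (2 * beta * (1 - gamma) * sigma).
  set M := Rmax 1 c.
  have HM1 : 1 <= M by apply: Rmax_l.
  have Hsq : 0 <= sqrt eta by apply: sqrt_pos.
  have Halpha : forall t, / M <= alpha t.
    move=> t; have [_ [_ [Hin [[i [Hai [Harm Hmin]]] _]]]] := Hk t.
    case: i Hai Harm Hmin => [|j] Hai Harm Hmin.
      rewrite Hai /=; rewrite -Rinv_1; apply: Rinv_le_contravar; lra.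
    set tau := 2 * (1 - gamma) * sigma / ((1 + sqrt eta) * L).
    have Htau : 0 < tau by rewrite /tau; apply: Rdiv_lt_0_compat; nra.
    have Hbj : tau < beta ^ j.
      apply: Rnot_le_lt => Hle; apply: (Hmin j (ltnSn j)).
      have [_ [_ h3]] := Hdir t.
      have [HDd _] := Hin.
      apply: (armijo_suff (eta := eta) (H := H t) (sigma := sigma) (L := L)) => //; try lra.
      split; [apply: pow_lt; lra | apply: pow_le1; lra].
    have Ec : c = / (beta * tau).
      rewrite /c /tau; field; repeat split; nra.
    have : / M <= / c by apply: Rinv_le_contravar; [rewrite Ec; apply: Rinv_0_lt_compat; nra | apply: Rmax_r].
    rewrite Ec Rinv_inv Hai /=; nra.
  have Hmal : / M <= ma by apply: min_upto_lb.
  have HM0 : 0 < / M by apply: Rinv_0_lt_compat; lra.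
  have : / ma <= M by rewrite -(Rinv_inv M); apply: Rinv_le_contravar.
  move=> Hinv.
  have -> : A / (gamma * INR (k + 1) * ma) = A / (gamma * INR (k + 1)) * / ma by field; lra.
  apply: Rmult_le_compat_l => //.
  rewrite /Rdiv; apply: Rmult_le_pos => //; left; exact: Rinv_0_lt_compat.
- move=> v beta gamma x H0 m Hs ds [Hb [Hga [_ [Ex0 Hk]]]] k.
  have HD : forall t, D (x t).
    elim=> [|t IH]; first by rewrite Ex0.
    have [_ [_ [_ [_ [_ [[HDa _] Hxt]]]]]] := Hk t.
    by rewrite Hxt.
  have Hdec : forall t, Fv f psi (x (S t)) <= Fv f psi (x t) -
      gamma * 1 * Rabs (Qval gradf psi (x t) (Hs t (m t)) (ds t (m t))).
    move=> t; have [_ [_ [_ [_ [_ [[_ [h1 h2]] Hxt]]]]]] := Hk t.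
    rewrite Hxt.
    have hq : Qval gradf psi (x t) (Hs t (m t)) (ds t (m t)) <= 0 by nra.
    rewrite Rabs_left1 //; lra.
  have Htel := telescope (fun t => Fv f psi (x t)) (fun _ => 1)
      (fun t => Rabs (Qval gradf psi (x t) (Hs t (m t)) (ds t (m t)))) (g := gamma) (Fstar := Fstar)
      ltac:(lra) (fun t => Rle_0_1) (fun t => Rabs_pos _) Hdec
      (fun t => Hinf _ (HD t)) k.
  rewrite /= Ex0 min_upto_const Rmult_1_l in Htel.
  have HI : 0 < INR (k + 1) by apply: lt_0_INR; rewrite addn1; apply/ltP.
  have HB : 0 < gamma * INR (k + 1) by nra.
  set mQ := min_upto _ k in Htel *.
  have -> : mQ = (gamma * INR (k + 1) * mQ) / (gamma * INR (k + 1)) by field; lra.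
  rewrite /Rdiv; apply: Rmult_le_compat_r => //.
  by left; apply: Rinv_0_lt_compat.
Qed.
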